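(* Let $p>1$, $s\ge r\ge2$, let $Q$ be an $s$-vertex $r$-graph and let $\mathcal P$ be a hereditary property of $r$-graphs with $\lambda^{(p)}(Q,\mathcal P)>0$. Writing $\lambda_n^{(p)}=\lambda^{(p)}(Q,\mathcal P_n)$, there exist infinitely many $n$ such that $$\frac{\lambda_{n-1}^{(p)}(n-1)^{s/p}}{(n-1)_s}-\frac{\lambda_n^{(p)}n^{s/p}}{(n)_s}<\frac{1}{n\log n}\cdot\frac{\lambda_n^{(p)}n^{s/p}}{(n)_s},$$ where $(m)_s=m(m-1)\cdots(m-s+1)$.
   Context: An $r$-graph ($r\ge 2$) is a finite hypergraph all of whose edges have exactly $r$ vertices. For $I\subseteq V(H)$, $H[I]$ denotes the induced subhypergraph on $I$. For an $s$-vertex $r$-graph $Q$ and an $r$-graph $H$, $\mathcal N(Q,H)$ is the number of (not necessarily induced) subgraphs of $H$ isomorphic to $Q$. For an $n$-vertex $r$-graph $H$ with vertex set $[n]$ and $\mathbf x\in\mathbb R^n$, $P_{Q,H}(\mathbf x)=s!\sum_{\{i_1,\dots,i_s\}\in\binom{[n]}{s}}\mathcal N(Q,H[\{i_1,\dots,i_s\}])\,x_{i_1}\cdots x_{i_s}$, and for $p\ge1$, $\lambda^{(p)}(Q,H)=\max_{\|\mathbf x\|_p=1}P_{Q,H}(\mathbf x)$. A hereditary property $\mathcal P$ of $r$-graphs is a family of $r$-graphs closed under isomorphism and under taking induced subgraphs; as a standing assumption, whenever $H\in\mathcal P$, the disjoint union of $H$ with an isolated vertex is also in $\mathcal P$.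 $\mathcal P_n$ is the set of members of $\mathcal P$ with $n$ vertices; $\lambda^{(p)}(Q,\mathcal P_n)=\max\{\lambda^{(p)}(Q,H):H\in\mathcal P_n\}$ and $\lambda^{(p)}(Q,\mathcal P)=\lim_{n\to\infty}\lambda^{(p)}(Q,\mathcal P_n)n^{s/p-s}$ (this limit exists). Here $\log$ is the natural logarithm. *)

(* Defs.v *)
From HB Require Import structures.
From mathcomp Require Import all_boot all_order all_algebra.
From mathcomp Require Import all_classical all_reals all_analysis.
Set Implicit Arguments. Unset Strict Implicit. Unset Printing Implicit Defensive.
Import Order.TTheory GRing.Theory Num.Theory numFieldNormedType.Exports.
Local Open Scope ring_scope.

Definition is_rgraph (r n : nat) (E : {set {set 'I_n}}) : Prop :=
  forall e, e \in E -> #|e| = r.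

(* Number of (not necessarily induced) subgraphs (V',E') of the hypergraph
   with vertex set V and edge set E that are isomorphic to the s-vertex
   hypergraph with edge set EQ: those are exactly the pairs
   (f('I_s), {f(e) | e in EQ}) with f : 'I_s -> V injective and f(EQ) in E. *)
Definition nsub (s n : nat) (EQ : {set {set 'I_s}})
    (V : {set 'I_n}) (E : {set {set 'I_n}}) : nat :=
  #|[set VE : {set 'I_n} * {set {set 'I_n}} |
     [exists f : {ffun 'I_s -> 'I_n},
       [&& injectiveb f, f @: [set: 'I_s] \subset V,
           VE.1 == f @: [set: 'I_s],
           VE.2 == (fun e : {set 'I_s} => f @: e) @: EQ & VE.2 \subset E]]]|.

Definition induced (n : nat) (E : {set {set 'I_n}}) (I : {set 'I_n}) :
  {set {set 'I_n}} := [set e in E | e \subset I].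

Local Open Scope classical_set_scope.

Definition PQH (R : realType) (s n : nat) (EQ : {set {set 'I_s}})
    (E : {set {set 'I_n}}) (x : 'I_n -> R) : R :=
  (s`!)%:R * \sum_(I : {set 'I_n} | #|I| == s)
     (nsub EQ I (induced E I))%:R * \prod_(i in I) x i.

Definition pnorm (R : realType) (n : nat) (p : R) (x : 'I_n -> R) : R :=
  (\sum_(i < n) `|x i| `^ p) `^ p^-1.

(* lambda^{(p)}(Q,H) = max over the unit l^p sphere (written as sup; the
   sphere is compact and P_{Q,H} continuous, so the sup is attained) *)
Definition lamH (R : realType) (p : R) (s n : nat) (EQ : {set {set 'I_s}})
    (E : {set {set 'I_n}}) : R :=
  sup [set PQH EQ E x | x in [set x : 'I_n -> R | pnorm p x = 1]].

Definition property := forall n : nat, {set {set 'I_n}} -> Prop.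

(* Hereditary property of r-graphs (with the standing isolated-vertex
   assumption).  Closure under isomorphism and induced subgraphs is encoded
   as closure under pulling back along injections 'I_m -> 'I_n (a bijection
   gives isomorphism closure, an injection onto I gives H[I] relabelled). *)
Definition hereditary_rprop (r : nat) (P : property) : Prop :=
  [/\ (forall n E, P n E -> is_rgraph r E),
      (forall m n (f : 'I_m -> 'I_n) (E : {set {set 'I_n}}),
          injective f -> P n E ->
          P m (finset (fun e : {set 'I_m} => f @: e \in E)))
    & (forall n (E : {set {set 'I_n}}),
          P n E -> P n.+1 ((fun e : {set 'I_n} => widen_ord (leqnSn n) @: e) @: E))].

Definition lamPn (R : realType) (p : R) (s : nat) (EQ : {set {set 'I_s}})
    (P : property) (n : nat) : R :=
  sup [set lamH p EQ E | E in [set E : {set {set 'I_n}} | P n E]].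

Definition lamP (R : realType) (p : R) (s : nat) (EQ : {set {set 'I_s}})
    (P : property) : R :=
  limn (fun n : nat => lamPn p EQ P n * n%:R `^ (s%:R / p - s%:R)).

Definition anorm (R : realType) (p : R) (s : nat) (EQ : {set {set 'I_s}})
    (P : property) (n : nat) : R :=
  lamPn p EQ P n * n%:R `^ (s%:R / p) / (n ^_ s)%:R.

(* Main.v *)
Require Import Defs.
From HB Require Import structures.
From mathcomp Require Import all_boot all_order all_algebra.
From mathcomp Require Import all_classical all_reals all_analysis.
Import Order.TTheory GRing.Theory Num.Theory numFieldNormedType.Exports.
From mathcomp Require Import zify lra.
Local Open Scope classical_set_scope.
Local Open Scope ring_scope.

Lemma ffact_le_exp (n m : nat) : (n ^_ m <= n ^ m)%N.
Proof.
elim: m n => [|m IH] n; first by rewrite ffactn0 expn0.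
rewrite ffactnS expnS leq_mul2l; apply/orP; right.
apply: leq_trans (IH n.-1) _; have [->|m0] := posnP m; first by rewrite !expn0.
by rewrite leq_exp2r // leq_pred.
Qed.

Lemma ln_sub_le {R : realType} {x y : R} : 0 < x -> x <= y ->
  ln y - ln x <= (y - x) / x.
Proof.
move=> x0 xy.
have y0 : 0 < y by apply: lt_le_trans xy.
rewrite -ln_div ?posrE //.
have -> : y / x = 1 + (y - x) / x by rewrite mulrBl divff ?gt_eqF // addrC subrK.
apply: le_ln1Dx.
apply: lt_le_trans (_ : 0 <= _); first by rewrite ltrN10.
by apply: divr_ge0; [rewrite subr_ge0|apply: ltW].
Qed.

Lemma lnln_inc (R : realType) (k : nat) : (2 <= k)%N ->
  ln (ln (k.+1%:R : R)) - ln (ln (k%:R : R)) <= (k%:R * ln (k%:R : R))^-1.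
Proof.
move=> k2.
have k0 : (0 : R) < k%:R by rewrite ltr0n; case: k k2.
have lk0 : (0 : R) < ln k%:R by apply: ln_gt0; rewrite ltr1n.
have kk : (k%:R : R) <= k.+1%:R by rewrite ler_nat.
have lkk : ln (k%:R : R) <= ln k.+1%:R.
  by rewrite ler_ln ?posrE // (lt_le_trans k0 kk).
apply: le_trans (ln_sub_le lk0 lkk) _.
rewrite invfM; apply: ler_wpM2r; first by rewrite invr_ge0 ltW.
apply: le_trans (ln_sub_le k0 kk) _.
by rewrite -natrB // subSnn mul1r.
Qed.

Lemma anorm_ge (R : realType) (p : R) (s : nat) (EQ : {set {set 'I_s}})
  (P : property) (n : nat) : (s <= n)%N -> (0 < n)%N ->
  0 <= lamPn p EQ P n * n%:R `^ (s%:R / p - s%:R) ->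
  lamPn p EQ P n * n%:R `^ (s%:R / p - s%:R) <= anorm p EQ P n.
Proof.
move=> sn n0 b0; rewrite /anorm.
have e : (n%:R : R) `^ (s%:R / p) = n%:R `^ (s%:R / p - s%:R) * n%:R ^+ s.
  rewrite -powR_mulrn ?ler0n // -powRD ?subrK //.
  by apply/implyP => _; rewrite pnatr_eq0 -lt0n.
have f0 : (0 : R) < (n ^_ s)%:R by rewrite ltr0n ffact_gt0.
rewrite e mulrA -mulrA; apply: ler_peMr => //.
by rewrite ler_pdivlMr // mul1r -natrX ler_nat ffact_le_exp.
Qed.

Theorem lemma3p4 (R : realType) (p : R) (r s : nat)
    (EQ : {set {set 'I_s}}) (P : property) :
  1 < p -> (2 <= r)%N -> (r <= s)%N -> is_rgraph r EQ ->
  hereditary_rprop r P ->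
  0 < lamP p EQ P ->
  forall N : nat, exists n : nat, (N < n)%N /\
    anorm p EQ P n.-1 - anorm p EQ P n
      < (n%:R * ln (n%:R : R))^-1 * anorm p EQ P n.
Proof.
move=> p1 r2 rs HQ HP L0 N.
set b := fun n : nat => lamPn p EQ P n * n%:R `^ (s%:R / p - s%:R).
have cb : cvgn b.
  apply: contrapT => nc; move: L0; rewrite /lamP -/b (dvgP nc).
  by rewrite ltxx.
set L := lamP p EQ P.
have bL : b @ \oo --> L by exact: cb.
set c := L / 2.
have c0 : 0 < c by rewrite divr_gt0.
have cL : c < L by rewrite ltr_pdivrMr // ltr_pMr // ltr1n.
have [M0 _ HM0] := cvgr_gt _ bL _ cL.
apply: contrapT => H.
set a := anorm p EQ P.
have H' : forall n, (N < n)%N -> (n%:R * ln (n%:R : R))^-1 * a n <= a n.-1 - a n.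
  by move=> n Nn; rewrite leNgt; apply/negP => h; apply: H; exists n.
set M := maxn N.+1 (maxn M0 (maxn s 2)).
have aM : forall n, (M <= n)%N -> c <= a n.
  move=> n Mn.
  have hb : c < b n by apply: HM0; rewrite /= ; lia.
  apply: le_trans (ltW hb) _; apply: anorm_ge; try lia.
  exact: ltW (lt_trans c0 hb).
set f := fun k : nat => ln (ln (k.+1%:R : R)).
have step : forall j, a (M + j)%N + c * f (M + j)%N <= a M + c * f M.
  elim=> [|j IH]; first by rewrite addn0.
  apply: le_trans IH; rewrite addnS.
  set m := (M + j)%N.
  have h1 : f m.+1 - f m <= (m.+1%:R * ln (m.+1%:R : R))^-1.
    by apply: lnln_inc; lia.
  have h2 : c * (m.+1%:R * ln (m.+1%:R : R))^-1 <= a m - a m.+1.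
    apply: le_trans (H' m.+1 _); last by lia.
    rewrite mulrC; apply: ler_wpM2l; last by apply: aM; lia.
    rewrite invr_ge0 mulr_ge0 // ln_ge0 // ler1n; lia.
  have h3 : c * (f m.+1 - f m) <= a m - a m.+1.
    by apply: le_trans h2; apply: ler_wpM2l => //; exact: ltW.
  rewrite mulrBr in h3; lra.
set K := (a M + c * f M) / c.
set j := Num.Def.trunc (expR (expR K)).
set n := (M + j)%N.
have s1 := step j; have s2 := aM n (leq_addr _ _).
have fK : f n < K.
  rewrite /K ltr_pdivlMr // mulrC; lra.
have ej : expR (expR K) < n.+1%:R.
  apply: lt_le_trans (truncnS_gt _) _; by rewrite ler_nat /n /j ltnS leq_addl.
have lK : expR K < ln (n.+1%:R : R).
  by rewrite -(expRK (expR K)) ltr_ln ?posrE ?expR_gt0 // (lt_trans (expR_gt0 _) ej).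
have : K < f n.
  by rewrite /f -(expRK K) ltr_ln ?posrE ?expR_gt0 // (lt_trans (expR_gt0 _) lK).
by rewrite ltNge (ltW fK).
Qed.
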